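(* Let $K\subset\mathbb R$ be bounded and $T:K\to K$. If there exists a $T^{\mathbb N}$ interval of positive length, then there exist a subinterval $I\subset K$ of positive length and $n\in\mathbb N$ such that $T^nx=x$ for all $x\in I$.
   Context: An interval is a bounded nonempty connected subset of $\mathbb R$. A subinterval $I\subset K$ is a $T^m$ interval if $T^mx-x$ is constant for $x\in I$ ($T^m$ the $m$-fold composition); it is a $T^{\mathbb N}$ interval if it is a $T^m$ interval for every $m\in\mathbb N$. *)

(* Defs.v *)
From Stdlib Require Import Reals.
Open Scope R_scope.

Fixpoint iter (m : nat) (T : R -> R) (x : R) : R :=
  match m with O => x | S k => T (iter k T x) end.

Definition bounded_set (K : R -> Prop) : Prop :=
  exists M, forall x, K x -> Rabs x <= M.

Definition is_interval (I : R -> Prop) : Prop :=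
  bounded_set I /\ (exists x, I x) /\
  (forall x y z, I x -> I z -> x <= y <= z -> I y).

(* An interval has positive length iff it contains two distinct points. *)
Definition pos_length (I : R -> Prop) : Prop :=
  exists a b, I a /\ I b /\ a < b.

Definition subset (I K : R -> Prop) : Prop := forall x, I x -> K x.

Definition Tm_interval (T : R -> R) (m : nat) (I : R -> Prop) : Prop :=
  exists c, forall x, I x -> iter m T x - x = c.

(* N = {1,2,3,...} *)
Definition TN_interval (T : R -> R) (I : R -> Prop) : Prop :=
  forall m, (1 <= m)%nat -> Tm_interval T m I.

(* Main.v *)
Require Import Defs.
From Stdlib Require Import Reals Lra Lia Classical.
Open Scope R_scope.

Lemma Rabs_le_between' : forall x y, Rabs x <= y -> -y <= x <= y.
Proof. intros x y; unfold Rabs; destruct (Rcase_abs x); lra. Qed.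

Lemma pigeon : forall n (f : nat -> nat), (forall k, (k <= n)%nat -> (f k < n)%nat) ->
  exists i j, (i < j)%nat /\ (j <= n)%nat /\ f i = f j.
Proof.
  induction n as [|n IH]; intros f Hf.
  - specialize (Hf 0%nat (le_n 0)). lia.
  - destruct (classic (exists k, (k <= n)%nat /\ f k = f (S n))) as [[k [Hk Hfk]]|Hno].
    + exists k, (S n). repeat split; lia.
    + set (g := fun k => if Nat.eqb (f k) n then f (S n) else f k).
      destruct (IH g) as [i [j [Hij [Hjn Hg]]]].
      * intros k Hk. unfold g. destruct (Nat.eqb_spec (f k) n) as [E|E].
        -- assert (f (S n) <> n). { intro E2. apply Hno. exists k. split; lia. }
           specialize (Hf (S n) (le_n _)). lia.
        -- specialize (Hf k ltac:(lia)). lia.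
      * exists i, j. split; [lia|]. split; [lia|].
        unfold g in Hg.
        destruct (Nat.eqb_spec (f i) n); destruct (Nat.eqb_spec (f j) n); try lia.
        -- exfalso. apply Hno. exists j. split; [lia|]. lia.
        -- exfalso. apply Hno. exists i. split; [lia|]. lia.
Qed.

Lemma iter_add (T : R -> R) : forall (p i : nat) (x : R), iter (p + i)%nat T x = iter p T (iter i T x).
Proof. induction p; intros; simpl; [reflexivity| rewrite IHp; reflexivity]. Qed.

Lemma iter_K (K : R -> Prop) (T : R -> R) : (forall x, K x -> K (T x)) ->
  forall m x, K x -> K (iter m T x).
Proof. intros H; induction m; intros; simpl; auto. Qed.

Lemma up_bound_nat : forall y B, 0 <= y <= B ->
  (Z.to_nat (up y) <= Z.to_nat (up B))%nat /\ (0 < up y)%Z.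
Proof.
  intros y B [H0 H1]. destruct (archimed y) as [A1 A2]. destruct (archimed B) as [B1 B2].
  assert (up y < up B + 1)%Z.
  { apply lt_IZR. rewrite plus_IZR. lra. }
  assert (0 < up y)%Z. { apply lt_IZR. lra. }
  split; [lia|lia].
Qed.

Theorem theorem2p5 (K : R -> Prop) (T : R -> R) :
  bounded_set K ->
  (forall x, K x -> K (T x)) ->
  (exists J, is_interval J /\ subset J K /\ pos_length J /\ TN_interval T J) ->
  exists I (n : nat), is_interval I /\ subset I K /\ pos_length I /\
    (1 <= n)%nat /\ forall x, I x -> iter n T x = x.
Proof.
  intros [M HM] HT [J [[[MJ HMJ] [_ Hconv]] [Hsub [[a [b [Ha [Hb Hab]]]] HTN]]]].
  set (c := fun m => iter m T a - a).
  assert (Hc : forall m x, J x -> iter m T x - x = c m).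
  { intros m x Hx. destruct m as [|m].
    - unfold c. simpl. lra.
    - destruct (HTN (S m) ltac:(lia)) as [c' Hc'].
      unfold c. rewrite (Hc' x Hx), (Hc' a Ha). reflexivity. }
  set (L := b - a).
  assert (HL : 0 < L) by (unfold L; lra).
  assert (HaK : K a) by (apply Hsub; exact Ha).
  assert (Hcb : forall m, Rabs (c m) <= 2 * M).
  { intro m. unfold c. pose proof (HM _ (iter_K K T HT m a HaK)).
    pose proof (HM _ HaK).
    apply Rabs_le_between' in H. apply Rabs_le_between' in H0.
    unfold Rabs; destruct (Rcase_abs (iter m T a - a)); lra. }
  assert (HM0 : 0 <= M) by (pose proof (HM _ HaK); pose proof (Rabs_pos a); lra).
  set (B := 4 * M / L).
  set (f := fun k => Z.to_nat (up ((c k + 2 * M) / L))).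
  destruct (pigeon (S (Z.to_nat (up B))) f) as [i [j [Hij [_ Hf]]]].
  { intros k _. unfold f.
    assert (0 <= (c k + 2 * M) / L <= B).
    { pose proof (Hcb k) as Hk. apply Rabs_le_between' in Hk. unfold B. split.
      - unfold Rdiv; apply Rmult_le_pos; [lra | left; apply Rinv_0_lt_compat; lra].
      - unfold Rdiv. apply Rmult_le_compat_r; [left; apply Rinv_0_lt_compat; lra| lra]. }
    destruct (up_bound_nat _ _ H). lia. }
  assert (Hd : Rabs (c j - c i) < L).
  { unfold f in Hf.
    pose proof (Hcb i) as Hi. pose proof (Hcb j) as Hj.
    apply Rabs_le_between' in Hi. apply Rabs_le_between' in Hj.
    set (yi := (c i + 2 * M) / L) in *. set (yj := (c j + 2 * M) / L) in *.
    assert (0 <= yi) by (unfold Rdiv; apply Rmult_le_pos; [lra | left; apply Rinv_0_lt_compat; lra]).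
    assert (0 <= yj) by (unfold Rdiv; apply Rmult_le_pos; [lra | left; apply Rinv_0_lt_compat; lra]).
    destruct (archimed yi) as [I1 I2]. destruct (archimed yj) as [J1 J2].
    assert (0 < up yi)%Z by (apply lt_IZR; lra).
    assert (0 < up yj)%Z by (apply lt_IZR; lra).
    assert (E : up yi = up yj) by lia.
    rewrite E in I1, I2.
    assert (Hy : Rabs (yj - yi) < 1) by (apply Rabs_def1; lra).
    assert (Hcd : c j - c i = L * (yj - yi)).
    { unfold yi, yj. field. lra. }
    rewrite Hcd, Rabs_mult, (Rabs_pos_eq L) by lra.
    rewrite <- (Rmult_1_r L) at 2. apply Rmult_lt_compat_l; lra. }
  set (p := (j - i)%nat). set (d := c j - c i) in *.
  assert (Hp : (p + i = j)%nat) by (unfold p; lia).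
  assert (F1 : forall x, J x -> iter p T (x + c i) = x + c i + d).
  { intros x Hx. assert (E : x + c i = iter i T x) by (rewrite <- (Hc i x Hx); ring).
    rewrite E, <- iter_add, Hp. pose proof (Hc j x Hx). unfold d. lra. }
  destruct (Req_dec d 0) as [Hd0|Hd0].
  - exists (fun y => exists x, J x /\ y = x + c i), p.
    split; [|split; [|split; [|split]]].
    + split; [|split].
      * exists (MJ + Rabs (c i)). intros y [x [Hx ->]].
        pose proof (HMJ x Hx). pose proof (Rabs_triang x (c i)). lra.
      * exists (a + c i). exists a. auto.
      * intros y1 y2 y3 [x1 [Hx1 ->]] [x3 [Hx3 ->]] Hy. exists (y2 - c i). split; [|ring].
        apply (Hconv x1 _ x3); auto; lra.
    + intros y [x [Hx ->]]. assert (E : x + c i = iter i T x) by (rewrite <- (Hc i x Hx); ring).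
      rewrite E. apply iter_K; auto.
    + exists (a + c i), (b + c i). split; [exists a; auto|]. split; [exists b; auto|]. lra.
    + unfold p; lia.
    + intros y [x [Hx ->]]. rewrite F1 by auto. lra.
  - exfalso.
    assert (Hxs : exists xs, J xs /\ J (xs + d)).
    { apply Rabs_def2 in Hd. unfold L in Hd. destruct (Rle_lt_dec 0 d).
      - exists a. split; auto. apply (Hconv a _ b); auto; lra.
      - exists b. split; auto. apply (Hconv a _ b); auto; lra. }
    destruct Hxs as [xs [Hx1 Hx2]].
    assert (Hk : forall k, c (k * p + i)%nat = c i + INR k * d).
    { induction k as [|k IH].
      - simpl. ring.
      - rewrite <- (Hc _ xs Hx1).
        replace (S k * p + i)%nat with (k * p + (p + i))%nat by lia.
        rewrite !iter_add.
        assert (E : iter i T xs = xs + c i) by (rewrite <- (Hc i xs Hx1); ring).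
        rewrite E, F1 by auto.
        replace (xs + c i + d) with ((xs + d) + c i) by ring.
        assert (E2 : iter i T (xs + d) = xs + d + c i) by (rewrite <- (Hc i (xs + d) Hx2); ring).
        rewrite <- E2, <- iter_add.
        pose proof (Hc (k * p + i)%nat (xs + d) Hx2).
        rewrite S_INR. lra. }
    assert (Had : 0 < Rabs d) by (apply Rabs_pos_lt; auto).
    set (z := up (4 * M / Rabs d)).
    destruct (archimed (4 * M / Rabs d)) as [A1 A2].
    assert (H0z : 0 <= 4 * M / Rabs d)
      by (unfold Rdiv; apply Rmult_le_pos; [lra | left; apply Rinv_0_lt_compat; lra]).
    assert (Hz : (0 < z)%Z) by (apply lt_IZR; unfold z; lra).
    set (k := Z.to_nat z).
    assert (Hkz : INR k = IZR z) by (unfold k; rewrite INR_IZR_INZ, Znat.Z2Nat.id; [reflexivity|lia]).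
    pose proof (Hk k) as Hkk.
    pose proof (Hcb (k * p + i)%nat) as B1. pose proof (Hcb i) as B2.
    apply Rabs_le_between' in B1. apply Rabs_le_between' in B2.
    assert (Hgt : 4 * M < INR k * Rabs d).
    { rewrite Hkz. fold z in A1.
      apply (Rmult_lt_compat_r (Rabs d)) in A1; auto.
      unfold Rdiv in A1. rewrite Rmult_assoc, Rinv_l in A1 by lra. lra. }
    assert (Habs : Rabs (INR k * d) = INR k * Rabs d)
      by (rewrite Rabs_mult, Rabs_pos_eq by apply pos_INR; reflexivity).
    revert Habs. unfold Rabs at 1. destruct (Rcase_abs (INR k * d)); intro; lra.
Qed.
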